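(* Let $\epsilon>0$ be sufficiently small, and for $(\phi,\theta)$ spherical-polar coordinates on $S^2$ let $L_s(\phi,\theta)\in R(T^2,2)$ be as defined in the context, with $\nu=\epsilon\sin\phi$ and $D=\cos^2\nu+\sin^2\nu\sin^2\theta$. On the set $\{y\neq0\}=\{\phi\in(0,\pi),\ \theta\notin\{0,\pi\}\}$ the map $(\phi,\theta)\mapsto L_s(\phi,\theta)$ is injective and takes values in $P_4$. Moreover, writing $\hat a,\hat b$ for the unit vectors with $a=i\hat a\cdot\vec\sigma$, $b=i\hat b\cdot\vec\sigma$ in the normalized representative of $L_s(\phi,\theta)$: for $\theta\in(0,\pi)$, $$\hat a=(-\sin(\phi+\nu),-\cos(\phi+\nu),0),$$ $$\hat b=D^{-1}\Big(\cos^2\nu\cos^2\theta\sin(\phi+\nu)+\sin^2\theta\sin(\phi-\nu),\ \cos^2\nu\cos^2\theta\cos(\phi+\nu)+\sin^2\theta\cos(\phi-\nu),\ -\tfrac12\sin 2\nu\sin2\theta\Big),$$ and for $\theta\in(\pi,2\pi)$, $$\hat a=(\sin(\phi+\nu),\cos(\phi+\nu),0),$$ $$\hat b=D^{-1}\Big(-\cos^2\nu\cos^2\theta\sin(\phi+\nu)-\sin^2\theta\sin(\phi-\nu),\ -\cos^2\nu\cos^2\theta\cos(\phi+\nu)-\sin^2\theta\cos(\phi-\nu),\ -\tfrac12\sin 2\nu\sin2\theta\Big).$$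
   Context: Pauli matrices standard; $[A,B]=ABA^{-1}B^{-1}$. $R(T^2,2)$ is the space of tuples $(A,B,a,b)\in SU(2)^4$ with $\operatorname{tr}a=\operatorname{tr}b=0$ and $[A,B]ab=1$ modulo simultaneous conjugation; $\mu([(A,B,a,b)])=\tfrac12\operatorname{tr}[A,B]$; $P_4=\mu^{-1}([-1,1))$. Every class in $P_4$ has a unique (normalized) representative with $A=r\cos\alpha+i\sigma_x\sqrt{1-r^2}+i\sigma_z r\sin\alpha$, $B=\cos\beta+i\sigma_z\sin\beta$, $\alpha\in[0,2\pi]$, $\beta\in(0,\pi)$, $r\in[0,1)$. Cartesian coordinates on $S^2$: $(x,y,z)=(\sin\phi\cos\theta,\sin\phi\sin\theta,\cos\phi)$. Sphere Lagrangian: for small $\epsilon>0$, $\nu=\epsilon\sin\phi$, define $L_s(\phi,\theta)=[(A,B,a,b)]\in R(T^2,2)$ where $a=i\sigma_z$, $h=(\cos^2\nu+\sin^2\nu\sin^2\theta)^{-1/2}(i\sigma_x\cos\nu-i\sigma_z\sin\nu\sin\theta)$, $A=h(\cos\phi+i\sin\phi(\sigma_x\cos\theta+\sigma_y\sin\theta))$, $B=\cos\nu+i\sin\nu(\sigma_x\cos\theta+\sigma_y\sin\theta)$, $b=-ha^{-1}h^{-1}$. (This is the image of the perturbed character variety $R_\pi^\natural(S^1\times D^2,A_1)\cong S^2$ under restriction to the boundary twice-punctured torus.) *)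

(* Defs.v *)
From Stdlib Require Import Reals.
Open Scope R_scope.

Record Cx := mkC { Re : R; Im : R }.
Definition CR (r : R) : Cx := mkC r 0.
Definition Ci : Cx := mkC 0 1.
Definition Cadd (z w : Cx) : Cx := mkC (Re z + Re w) (Im z + Im w).
Definition Cmul (z w : Cx) : Cx :=
  mkC (Re z * Re w - Im z * Im w) (Re z * Im w + Im z * Re w).
Definition Copp (z : Cx) : Cx := mkC (- Re z) (- Im z).
Definition Cconj (z : Cx) : Cx := mkC (Re z) (- Im z).
Definition Cinv (z : Cx) : Cx :=
  let n := Re z * Re z + Im z * Im z in mkC (Re z / n) (- Im z / n).

Record M2 := mkM { e11 : Cx; e12 : Cx; e21 : Cx; e22 : Cx }.
Definition Madd (A B : M2) : M2 :=
  mkM (Cadd (e11 A) (e11 B)) (Cadd (e12 A) (e12 B))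
      (Cadd (e21 A) (e21 B)) (Cadd (e22 A) (e22 B)).
Definition Mmul (A B : M2) : M2 :=
  mkM (Cadd (Cmul (e11 A) (e11 B)) (Cmul (e12 A) (e21 B)))
      (Cadd (Cmul (e11 A) (e12 B)) (Cmul (e12 A) (e22 B)))
      (Cadd (Cmul (e21 A) (e11 B)) (Cmul (e22 A) (e21 B)))
      (Cadd (Cmul (e21 A) (e12 B)) (Cmul (e22 A) (e22 B))).
Definition Mscale (c : Cx) (A : M2) : M2 :=
  mkM (Cmul c (e11 A)) (Cmul c (e12 A)) (Cmul c (e21 A)) (Cmul c (e22 A)).
Definition Mid : M2 := mkM (CR 1) (CR 0) (CR 0) (CR 1).
Definition Mdet (A : M2) : Cx :=
  Cadd (Cmul (e11 A) (e22 A)) (Copp (Cmul (e12 A) (e21 A))).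
Definition Mtr (A : M2) : Cx := Cadd (e11 A) (e22 A).
Definition Madj (A : M2) : M2 :=
  mkM (Cconj (e11 A)) (Cconj (e21 A)) (Cconj (e12 A)) (Cconj (e22 A)).
Definition Minv (A : M2) : M2 :=
  Mscale (Cinv (Mdet A)) (mkM (e22 A) (Copp (e12 A)) (Copp (e21 A)) (e11 A)).

Definition is_SU2 (A : M2) : Prop := Mmul A (Madj A) = Mid /\ Mdet A = CR 1.

Definition sigma_x : M2 := mkM (CR 0) (CR 1) (CR 1) (CR 0).
Definition sigma_y : M2 := mkM (CR 0) (Copp Ci) Ci (CR 0).
Definition sigma_z : M2 := mkM (CR 1) (CR 0) (CR 0) (CR (-1)).

Definition isig (x y z : R) : M2 :=
  Mscale Ci (Madd (Mscale (CR x) sigma_x)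
                  (Madd (Mscale (CR y) sigma_y) (Mscale (CR z) sigma_z))).

Definition comm (A B : M2) : M2 := Mmul (Mmul A B) (Mmul (Minv A) (Minv B)).

Record Tup := mkT { tA : M2; tB : M2; ta : M2; tb : M2 }.

(** Membership in (the space of tuples defining) R(T^2,2). *)
Definition in_RT2 (t : Tup) : Prop :=
  is_SU2 (tA t) /\ is_SU2 (tB t) /\ is_SU2 (ta t) /\ is_SU2 (tb t) /\
  Mtr (ta t) = CR 0 /\ Mtr (tb t) = CR 0 /\
  Mmul (Mmul (comm (tA t) (tB t)) (ta t)) (tb t) = Mid.

(** Simultaneous conjugation and the equivalence relation defining R(T^2,2). *)
Definition conjM (g X : M2) : M2 := Mmul (Mmul g X) (Minv g).
Definition conjT (g : M2) (t : Tup) : Tup :=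
  mkT (conjM g (tA t)) (conjM g (tB t)) (conjM g (ta t)) (conjM g (tb t)).
Definition tequiv (t1 t2 : Tup) : Prop :=
  exists g, is_SU2 g /\ conjT g t1 = t2.

(** mu([(A,B,a,b)]) = 1/2 tr [A,B]  (the trace of an SU(2) matrix is real). *)
Definition mu (t : Tup) : R := Re (Mtr (comm (tA t) (tB t))) / 2.
Definition in_P4 (t : Tup) : Prop := in_RT2 t /\ -1 <= mu t < 1.

Definition A_norm (r alpha : R) : M2 :=
  Madd (Mscale (CR (r * cos alpha)) Mid) (isig (sqrt (1 - r ^ 2)) 0 (r * sin alpha)).
Definition B_norm (beta : R) : M2 :=
  Madd (Mscale (CR (cos beta)) Mid) (isig 0 0 (sin beta)).

Definition normalized_rep (t t' : Tup) : Prop :=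
  tequiv t t' /\
  exists alpha beta r, 0 <= alpha <= 2 * PI /\ 0 < beta < PI /\ 0 <= r < 1 /\
    tA t' = A_norm r alpha /\ tB t' = B_norm beta.

Definition L_nu (eps phi : R) : R := eps * sin phi.
Definition L_D (eps phi theta : R) : R :=
  let nu := L_nu eps phi in cos nu ^ 2 + sin nu ^ 2 * sin theta ^ 2.
Definition L_s (eps phi theta : R) : Tup :=
  let nu := L_nu eps phi in
  let a := Mscale Ci sigma_z in
  let h := Mscale (CR (/ sqrt (L_D eps phi theta)))
             (Madd (Mscale (CR (cos nu)) (Mscale Ci sigma_x))
                   (Mscale (CR (- (sin nu * sin theta))) (Mscale Ci sigma_z))) in
  let n := Madd (Mscale (CR (cos theta)) sigma_x) (Mscale (CR (sin theta)) sigma_y) in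
  let A := Mmul h (Madd (Mscale (CR (cos phi)) Mid)
                        (Mscale (Cmul Ci (CR (sin phi))) n)) in
  let B := Madd (Mscale (CR (cos nu)) Mid) (Mscale (Cmul Ci (CR (sin nu))) n) in
  let b := Mscale (CR (-1)) (Mmul (Mmul h (Minv a)) (Minv h)) in
  mkT A B a b.

Definition dom_y_ne0 (phi theta : R) : Prop :=
  0 < phi < PI /\ 0 < theta < 2 * PI /\ theta <> PI.

(* Main.v *)
Require Import Defs.
From Stdlib Require Import Reals Lra Nsatz.
Open Scope R_scope.


Record Q := mkQ { q0 : R; q1 : R; q2 : R; q3 : R }.
Definition qM (p : Q) : M2 :=
  mkM (mkC (q0 p) (q3 p)) (mkC (q2 p) (q1 p)) (mkC (- q2 p) (q1 p)) (mkC (q0 p) (- q3 p)).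
Definition qmul (p q : Q) : Q :=
  mkQ (q0 p * q0 q - q1 p * q1 q - q2 p * q2 q - q3 p * q3 q)
      (q0 p * q1 q + q1 p * q0 q - (q2 p * q3 q - q3 p * q2 q))
      (q0 p * q2 q + q2 p * q0 q - (q3 p * q1 q - q1 p * q3 q))
      (q0 p * q3 q + q3 p * q0 q - (q1 p * q2 q - q2 p * q1 q)).
Definition qc (p : Q) : Q := mkQ (q0 p) (- q1 p) (- q2 p) (- q3 p).
Definition qn (p : Q) : R := q0 p ^ 2 + q1 p ^ 2 + q2 p ^ 2 + q3 p ^ 2.
Definition qs (r : R) (p : Q) : Q := mkQ (r * q0 p) (r * q1 p) (r * q2 p) (r * q3 p).
Definition q1_ : Q := mkQ 1 0 0 0.

Ltac nsat := cbn [pow] in *; nsatz.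
Ltac mcomp := repeat (match goal with |- mkM _ _ _ _ = mkM _ _ _ _ => f_equal | |- mkC _ _ = mkC _ _ => f_equal | |- mkQ _ _ _ _ = mkQ _ _ _ _ => f_equal end).

Lemma qM_mul p q : Mmul (qM p) (qM q) = qM (qmul p q).
Proof. destruct p, q; unfold Mmul, qM, qmul, Cadd, Cmul; simpl; mcomp; ring. Qed.

Lemma qM_inv p : qn p = 1 -> Minv (qM p) = qM (qc p).
Proof. destruct p as [a b c d]; unfold qn, Minv, Mscale, Cinv, Mdet, qM, qc, Cadd, Cmul, Copp; simpl.
intro H.
replace (a * a - d * - d + - (c * - c - b * b)) with 1 by (rewrite <- H; ring).
replace (a * - d + d * a + - (c * b + b * - c)) with 0 by ring.
mcomp; field. Qed.

Lemma qM_SU2 p : qn p = 1 -> is_SU2 (qM p).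
Proof. destruct p as [a b c d]; unfold qn, is_SU2, Mmul, Madj, Mdet, Mid, CR, qM, Cadd, Cmul, Copp, Cconj; simpl.
intro H; split; mcomp; try nra; ring. Qed.

Lemma qM_inj p q : qM p = qM q -> p = q.
Proof. destruct p, q; unfold qM; intro H; injection H; intros; simpl in *; f_equal; lra. Qed.

Lemma SU2_qM g : is_SU2 g -> exists p, g = qM p /\ qn p = 1.
Proof.
destruct g as [[a1 a2] [b1 b2] [c1 c2] [d1 d2]].
unfold is_SU2, Mmul, Madj, Mdet, Mid, CR, Cadd, Cmul, Copp, Cconj; simpl.
intros [H1 H2]. injection H1; injection H2; intros; simpl in *.
exists (mkQ a1 b2 b1 a2).
assert (Hd1 : d1 = a1) by nsatz.
assert (Hd2 : d2 = - a2) by nsatz.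
assert (Hc1 : c1 = - b1) by nsatz.
assert (Hc2 : c2 = b2) by nsatz.
subst. split. unfold qM; simpl; mcomp; ring. unfold qn; simpl. nra.
Qed.

Lemma qmul_assoc p q r : qmul (qmul p q) r = qmul p (qmul q r).
Proof. destruct p, q, r; unfold qmul; simpl; mcomp; ring. Qed.
Lemma qc_mul p q : qc (qmul p q) = qmul (qc q) (qc p).
Proof. destruct p, q; unfold qmul, qc; simpl; mcomp; ring. Qed.
Lemma qn_mul p q : qn (qmul p q) = qn p * qn q.
Proof. destruct p, q; unfold qmul, qn; simpl; ring. Qed.
Lemma qmul_c_r p : qn p = 1 -> qmul p (qc p) = q1_.
Proof. destruct p; unfold qmul, qn, qc, q1_; simpl; intro H; mcomp; try ring; rewrite <- H; ring. Qed.
Lemma qmul_c_l p : qn p = 1 -> qmul (qc p) p = q1_.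
Proof. destruct p; unfold qmul, qn, qc, q1_; simpl; intro H; mcomp; try ring; rewrite <- H; ring. Qed.
Lemma qmul_1_l p : qmul q1_ p = p.
Proof. destruct p; unfold qmul, q1_; simpl; mcomp; ring. Qed.
Lemma qmul_1_r p : qmul p q1_ = p.
Proof. destruct p; unfold qmul, q1_; simpl; mcomp; ring. Qed.
Lemma qn_c p : qn (qc p) = qn p.
Proof. destruct p; unfold qn, qc; simpl; ring. Qed.
Lemma qc_c p : qc (qc p) = p.
Proof. destruct p; unfold qc; simpl; mcomp; ring. Qed.


Definition qs' := qs.
Lemma qmul_s_l r p q : qmul (qs r p) q = qs r (qmul p q).
Proof. destruct p, q; unfold qmul, qs; simpl; mcomp; ring. Qed.
Lemma qmul_s_r r p q : qmul p (qs r q) = qs r (qmul p q).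
Proof. destruct p, q; unfold qmul, qs; simpl; mcomp; ring. Qed.
Lemma qs_s r s p : qs r (qs s p) = qs (r*s) p.
Proof. destruct p; unfold qs; simpl; mcomp; ring. Qed.
Lemma qc_s r p : qc (qs r p) = qs r (qc p).
Proof. destruct p; unfold qs, qc; simpl; mcomp; ring. Qed.
Lemma qs_1 p : qs 1 p = p.
Proof. destruct p; unfold qs; simpl; mcomp; ring. Qed.
Lemma qn_s r p : qn (qs r p) = r^2 * qn p.
Proof. destruct p; unfold qs, qn; simpl; ring. Qed.
Lemma qcr' p q : qn p = 1 -> qmul p (qmul (qc p) q) = q.
Proof. intro H; rewrite <- qmul_assoc, qmul_c_r, qmul_1_l; auto. Qed.
Lemma qcl' p q : qn p = 1 -> qmul (qc p) (qmul p q) = q.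
Proof. intro H; rewrite <- qmul_assoc, qmul_c_l, qmul_1_l; auto. Qed.

Lemma Mid_q : Mid = qM q1_.
Proof. unfold Mid, qM, q1_, CR; cbn [e11 e12 e21 e22 Re Im q0 q1 q2 q3]; mcomp; ring. Qed.
Lemma isig_q x y z : isig x y z = qM (mkQ 0 x y z).
Proof. unfold isig, qM, Mscale, Madd, sigma_x, sigma_y, sigma_z, Ci, CR, Cadd, Cmul, Copp; cbn [e11 e12 e21 e22 Re Im q0 q1 q2 q3]; mcomp; ring. Qed.
Lemma Mtr_q p : Mtr (qM p) = CR (2 * q0 p).
Proof. destruct p; unfold Mtr, qM, CR, Cadd; cbn [e11 e12 e21 e22 Re Im q0 q1 q2 q3]; mcomp; ring. Qed.
Lemma sMid_add x q : Madd (Mscale (CR x) Mid) (qM q) = qM (mkQ (x + q0 q) (q1 q) (q2 q) (q3 q)).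
Proof. destruct q; unfold qM, Mscale, Madd, Mid, CR, Cadd, Cmul; cbn [e11 e12 e21 e22 Re Im q0 q1 q2 q3]; mcomp; ring. Qed.
Lemma A_norm_q r al : A_norm r al = qM (mkQ (r * cos al) (sqrt (1 - r^2)) 0 (r * sin al)).
Proof. unfold A_norm; rewrite isig_q, sMid_add; cbn [q0 q1 q2 q3]; rewrite Rplus_0_r; reflexivity. Qed.
Lemma B_norm_q be : B_norm be = qM (mkQ (cos be) 0 0 (sin be)).
Proof. unfold B_norm; rewrite isig_q, sMid_add; cbn [q0 q1 q2 q3]; rewrite Rplus_0_r; reflexivity. Qed.

Definition qconj (g p : Q) : Q := qmul (qmul g p) (qc g).
Lemma conjM_q g p : qn g = 1 -> conjM (qM g) (qM p) = qM (qconj g p).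
Proof. intro H; unfold conjM, qconj; rewrite qM_inv, !qM_mul; auto. Qed.

Definition qT (A B a b : Q) : Tup := mkT (qM A) (qM B) (qM a) (qM b).
Lemma conjT_q g A B a b : qn g = 1 -> conjT (qM g) (qT A B a b) = qT (qconj g A) (qconj g B) (qconj g a) (qconj g b).
Proof. intro H; unfold conjT, qT; simpl; rewrite !conjM_q; auto. Qed.

Lemma qconj_mul g p q : qn g = 1 -> qconj g (qmul p q) = qmul (qconj g p) (qconj g q).
Proof. intro H; unfold qconj; rewrite !qmul_assoc, (qcl' g); auto. Qed.
Lemma qconj_comp g h p : qconj g (qconj h p) = qconj (qmul g h) p.
Proof. unfold qconj; rewrite qc_mul, !qmul_assoc; auto. Qed.
Lemma qconj_inv g p : qn g = 1 -> qconj (qc g) (qconj g p) = p.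
Proof. intro H; unfold qconj; rewrite qc_c, !qmul_assoc, (qcl' g), qmul_c_l, qmul_1_r; auto. Qed.
Lemma qn_conj g p : qn g = 1 -> qn (qconj g p) = qn p.
Proof. intro H; unfold qconj; rewrite !qn_mul, qn_c, H; ring. Qed.
Lemma qconj_s g r p : qconj g (qs r p) = qs r (qconj g p).
Proof. unfold qconj; rewrite qmul_s_r, qmul_s_l; auto. Qed.

Lemma rotz c s v : c^2 + s^2 = 1 -> qconj (mkQ c 0 0 s) v =
  mkQ (q0 v) ((c^2 - s^2) * q1 v + 2*c*s * q2 v) (- (2*c*s*q1 v) + (c^2-s^2) * q2 v) (q3 v).
Proof. destruct v; unfold qconj, qmul, qc; simpl; intro H; mcomp; try ring; nsatz. Qed.

Lemma roty r v : 2 * r^2 = 1 -> qconj (mkQ r 0 r 0) v = mkQ (q0 v) (- q3 v) (q2 v) (q1 v).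
Proof. destruct v; unfold qconj, qmul, qc; simpl; intro H; mcomp; try ring; nsatz. Qed.

Lemma fix_ez g : qn g = 1 -> qconj g (mkQ 0 0 0 1) = mkQ 0 0 0 1 -> q1 g = 0 /\ q2 g = 0.
Proof. destruct g as [c x y z]; unfold qn, qconj, qmul, qc; simpl; intros H E.
injection E; intros E3 E2 E1 E0. nra. Qed.


Lemma half C S : C^2 + S^2 = 1 -> exists c s, c^2 + s^2 = 1 /\ c^2 - s^2 = C /\ 2*c*s = S.
Proof.
intro H. assert (HC : -1 <= C <= 1) by nra.
destruct (Req_dec C (-1)) as [E|E].
- exists 0, 1. subst. split; [ring|]. split; [ring|]. nra.
- assert (P : 0 < (1 + C)/2) by lra.
  pose proof (sqrt_lt_R0 _ P) as Q. pose proof (sqrt_sqrt _ (Rlt_le _ _ P)) as R.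
  set (c := sqrt ((1+C)/2)) in *.
  assert (R2 : 2 * (c*c) = 1 + C) by (rewrite R; field).
  set (s := S / (2*c)).
  assert (Hs : s * (2 * c) = S) by (unfold s; field; lra).
  clearbody s c. clear R.
  assert (c2 : 0 < c^2) by nra.
  exists c, s. split; [|split].
  + apply (Rmult_eq_reg_l (4*c^2)); [|nra]. clear E P Q c2 HC. nsat.
  + apply (Rmult_eq_reg_l (4*c^2)); [|nra]. clear E P Q c2 HC. nsat.
  + rewrite <- Hs; ring.
Qed.

Lemma polar u v : u^2 + v^2 = 1 -> exists al, 0 <= al <= 2*PI /\ cos al = u /\ sin al = v.
Proof.
intro H. assert (Hu : -1 <= u <= 1) by nra.
pose proof (acos_bound u). pose proof (cos_acos u Hu). pose proof (sin_acos u Hu).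
assert (E : sqrt (1 - u²) = Rabs v).
{ replace (1 - u²) with (v²) by (unfold Rsqr; simpl in H; lra). apply sqrt_Rsqr_abs. }
rewrite E in *. pose proof PI_RGT_0.
destruct (Rle_or_lt 0 v) as [Hv|Hv].
- exists (acos u). rewrite Rabs_pos_eq in * by auto. split; [lra|auto].
- exists (2*PI - acos u). rewrite Rabs_left in * by auto.
  rewrite cos_minus, sin_minus, cos_2PI, sin_2PI. split; [lra|]. split; [rewrite H1; ring| rewrite H2; ring].
Qed.

Lemma Anorm_exists q : qn q = 1 -> q2 q = 0 -> 0 < q1 q ->
  exists r al, 0 <= al <= 2*PI /\ 0 <= r < 1 /\ qM q = A_norm r al.
Proof.
destruct q as [a x y z]; unfold qn; cbn [q0 q1 q2 q3]; intros H Hy Hx; subst y.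
assert (Hr2 : 0 <= a^2 + z^2) by nra.
set (r := sqrt (a^2+z^2)).
assert (R : r * r = a^2 + z^2) by (apply sqrt_sqrt; auto).
assert (R0 : 0 <= r) by apply sqrt_pos.
assert (S1 : sqrt (1 - r^2) = x).
{ replace (1 - r^2) with (x²) by (unfold Rsqr; simpl; lra). rewrite sqrt_Rsqr; lra. }
assert (Rl1 : r < 1) by nra.
destruct (Req_dec r 0) as [E|E].
- exists 0, 0. split; [pose proof PI_RGT_0; lra|]. split; [lra|].
  rewrite E in *. rewrite A_norm_q, S1. f_equal. f_equal; try rewrite cos_0; try rewrite sin_0; nra.
- destruct (polar (a/r) (z/r)) as [al [Hal [Hc Hs]]].
  { field_simplify; [|auto]. replace (r^2) with (r*r) by ring. rewrite R. field. intro. apply E. nra. }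
  exists r, al. split; auto. split; [lra|]. rewrite A_norm_q, S1, Hc, Hs. f_equal. f_equal; field; auto.
Qed.


Definition ez := mkQ 0 0 0 1.
Lemma conj_ez_lin H a b : qn H = 1 ->
  qconj H (mkQ a 0 0 b) = mkQ a (b * q1 (qconj H ez)) (b * q2 (qconj H ez)) (b * q3 (qconj H ez))
  /\ q0 (qconj H ez) = 0.
Proof. destruct H as [c x y z]; unfold qn, qconj, qmul, qc, ez; cbn [q0 q1 q2 q3]; intro N.
split; [mcomp|]; nsat. Qed.

Lemma stab H A0 cn sn cb sb : qn H = 1 -> 0 < sn -> 0 < sb ->
  qconj H (mkQ cn 0 0 sn) = mkQ cb 0 0 sb -> q2 A0 = 0 -> 0 < q1 A0 ->
  q2 (qconj H A0) = 0 -> 0 < q1 (qconj H A0) -> forall X, qconj H X = X.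
Proof.
intros N Hsn Hsb EB HA2 HA1 HB2 HB1.
destruct (conj_ez_lin H cn sn N) as [L E0].
rewrite L in EB.
pose proof (qn_conj H ez N) as NE. replace (qn ez) with 1 in NE by (unfold qn, ez; cbn; ring).
set (E := qconj H ez) in *.
assert (E1 := f_equal q1 EB); assert (E2 := f_equal q2 EB); assert (E3 := f_equal q3 EB); cbn [q1 q2 q3] in E1, E2, E3.
assert (q1 E = 0) by nra. assert (q2 E = 0) by nra.
assert (q3 E = 1).
{ unfold qn in NE. rewrite E0, H0, H1 in NE. assert (0 < q3 E) by nra. nra. }
assert (EE : qconj H ez = ez) by (fold E; destruct E; cbn in *; subst; reflexivity).
destruct (fix_ez H N EE) as [Hx Hy].
destruct H as [c x y z]. cbn [q1 q2] in Hx, Hy. subst x y.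
assert (Nc : c^2 + z^2 = 1) by (unfold qn in N; cbn [q0 q1 q2 q3] in N; nra).
rewrite (rotz c z A0 Nc) in HB2, HB1. cbn [q1 q2] in HB2, HB1. rewrite HA2 in HB2, HB1.
assert (cz : (2 * c * z) * q1 A0 = 0) by lra.
apply Rmult_integral in cz. destruct cz as [cz|cz]; [|lra].
assert (z = 0). { destruct (Rmult_integral _ _ cz) as [h|h]; [ destruct (Rmult_integral _ _ h) as [h'|h']; [lra| subst c; nra] | auto]. } subst z.
intro X. rewrite (rotz c 0 X Nc). destruct X as [x0 x1 x2 x3]; cbn [q0 q1 q2 q3].
assert (c^2 = 1) by nra. f_equal; nsat.
Qed.


Lemma gen_P x y c s : Madd (Mscale (CR x) Mid) (Mscale (Cmul Ci (CR y)) (Madd (Mscale (CR c) sigma_x) (Mscale (CR s) sigma_y))) = qM (mkQ x (y*c) (y*s) 0).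
Proof. cbv [qM Mscale Madd Mmul Mid CR Ci Cadd Cmul Copp sigma_x sigma_y sigma_z e11 e12 e21 e22 Re Im q0 q1 q2 q3 qs]; mcomp; ring. Qed.
Lemma gen_h k u w : Mscale (CR k) (Madd (Mscale (CR u) (Mscale Ci sigma_x)) (Mscale (CR w) (Mscale Ci sigma_z))) = qM (mkQ 0 (k*u) 0 (k*w)).
Proof. cbv [qM Mscale Madd Mmul Mid CR Ci Cadd Cmul Copp sigma_x sigma_y sigma_z e11 e12 e21 e22 Re Im q0 q1 q2 q3 qs]; mcomp; ring. Qed.
Lemma gen_a : Mscale Ci sigma_z = qM (mkQ 0 0 0 1).
Proof. cbv [qM Mscale Madd Mmul Mid CR Ci Cadd Cmul Copp sigma_x sigma_y sigma_z e11 e12 e21 e22 Re Im q0 q1 q2 q3 qs]; mcomp; ring. Qed.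
Lemma gen_s r p : Mscale (CR r) (qM p) = qM (qs r p).
Proof. destruct p as [p0 p1 p2 p3]; cbv [qM Mscale Madd Mmul Mid CR Ci Cadd Cmul Copp sigma_x sigma_y sigma_z e11 e12 e21 e22 Re Im q0 q1 q2 q3 qs]; mcomp; ring. Qed.

Section S.
Variables e p t : R.
Definition nu := L_nu e p.
Definition cn := cos nu.
Definition sn := sin nu.
Definition cp := cos p.
Definition sp := sin p.
Definition ct := cos t.
Definition st := sin t.
Definition DD := L_D e p t.
Definition kk := / sqrt DD.
Definition hQ := mkQ 0 (kk*cn) 0 (kk * (-(sn*st))).
Definition PQ := mkQ cp (sp*ct) (sp*st) 0.
Definition BQ := mkQ cn (sn*ct) (sn*st) 0.
Definition aQ := mkQ 0 0 0 1.
Definition AQ := qmul hQ PQ.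
Definition bQ := qs (-1) (qconj hQ (qc aQ)).

Lemma DD_eq : DD = cn^2 + sn^2 * st^2.
Proof. reflexivity. Qed.

Lemma tri_p : cp^2 + sp^2 = 1.
Proof. unfold cp, sp. pose proof (sin2_cos2 p). unfold Rsqr in *. lra. Qed.
Lemma tri_n : cn^2 + sn^2 = 1.
Proof. unfold cn, sn. pose proof (sin2_cos2 nu). unfold Rsqr in *. lra. Qed.
Lemma tri_t : ct^2 + st^2 = 1.
Proof. unfold ct, st. pose proof (sin2_cos2 t). unfold Rsqr in *. lra. Qed.

Hypothesis He : 0 < e < 1.
Hypothesis Hp : 0 < p < PI.

Lemma sp_pos : 0 < sp.
Proof. apply sin_gt_0; lra. Qed.
Lemma nu_bd : 0 < nu < 1.
Proof. unfold nu, L_nu. pose proof sp_pos. pose proof (SIN_bound p). unfold sp in *. split; nra. Qed.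
Lemma cn_pos : 0 < cn.
Proof. pose proof nu_bd. pose proof PI2_1. apply cos_gt_0; lra. Qed.
Lemma sn_pos : 0 < sn.
Proof. pose proof nu_bd. pose proof PI2_1. apply sin_gt_0; lra. Qed.
Lemma DD_pos : 0 < DD.
Proof. rewrite DD_eq. pose proof cn_pos. nra. Qed.
Lemma kk_pos : 0 < kk.
Proof. unfold kk. apply Rinv_0_lt_compat, sqrt_lt_R0, DD_pos. Qed.
Lemma kk2 : kk^2 * DD = 1.
Proof. unfold kk. pose proof DD_pos as H. pose proof (sqrt_sqrt DD (Rlt_le _ _ H)) as E.
pose proof (sqrt_lt_R0 DD H). set (s := sqrt DD) in *. rewrite <- E. field. lra. Qed.

Lemma qn_hQ : qn hQ = 1.
Proof. unfold qn, hQ; cbn [q0 q1 q2 q3]. rewrite <- kk2, DD_eq. ring. Qed.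
Lemma qn_PQ : qn PQ = 1.
Proof. unfold qn, PQ; cbn [q0 q1 q2 q3]. pose proof tri_t. pose proof tri_p. nsat. Qed.
Lemma qn_BQ : qn BQ = 1.
Proof. unfold qn, BQ; cbn [q0 q1 q2 q3]. pose proof tri_t. pose proof tri_n. nsat. Qed.
Lemma qn_aQ : qn aQ = 1.
Proof. unfold qn, aQ; cbn [q0 q1 q2 q3]. ring. Qed.
Lemma qn_AQ : qn AQ = 1.
Proof. unfold AQ; rewrite qn_mul, qn_hQ, qn_PQ; ring. Qed.
Lemma qn_bQ : qn bQ = 1.
Proof. unfold bQ; rewrite qn_s, qn_conj, qn_c, qn_aQ; [ring | apply qn_hQ]. Qed.

Lemma Ls_q : L_s e p t = qT AQ BQ aQ bQ.
Proof. unfold L_s. cbv zeta. rewrite gen_h, gen_a, !gen_P.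
fold nu. fold DD. fold kk. fold cn sn st ct cp sp.
rewrite qM_mul, qM_inv, qM_inv, qM_mul, qM_mul, gen_s.
- reflexivity.
- change (qn hQ = 1). apply qn_hQ.
- apply qn_aQ.
Qed.

Lemma PB_comm : qmul PQ BQ = qmul BQ PQ.
Proof. unfold PQ, BQ, qmul; cbn [q0 q1 q2 q3]; mcomp; ring. Qed.
Lemma E_rot : qmul (qmul BQ (qc hQ)) (qc BQ) = qs (-1) (qmul (qmul aQ (qc hQ)) (qc aQ)).
Proof. pose proof tri_n; pose proof tri_t. unfold BQ, hQ, aQ, qmul, qc, qs; cbn [q0 q1 q2 q3]; mcomp; nsat. Qed.

Lemma rel_q : qmul (qmul (qmul (qmul AQ BQ) (qmul (qc AQ) (qc BQ))) aQ) bQ = q1_.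
Proof.
assert (PB' : forall Y, qmul PQ (qmul BQ Y) = qmul BQ (qmul PQ Y)) by (intro; rewrite <- !qmul_assoc, PB_comm; auto).
assert (E' : forall Y, qmul BQ (qmul (qc hQ) (qmul (qc BQ) Y)) = qs (-1) (qmul aQ (qmul (qc hQ) (qmul (qc aQ) Y)))).
{ intro Y. rewrite <- !qmul_assoc, E_rot, qmul_s_l, !qmul_assoc; auto. }
pose proof qn_hQ as Hh. pose proof qn_PQ as HP. pose proof qn_aQ as Ha.
unfold AQ, bQ, qconj. rewrite !qc_mul, !qmul_assoc, PB', (qcr' PQ) by auto.
rewrite E'. repeat rewrite qmul_s_r. rewrite qs_s.
rewrite (qcl' aQ) by auto. rewrite (qcl' hQ) by auto. rewrite (qcr' aQ) by auto. rewrite qmul_c_r by auto. replace (-1 * -1) with 1 by ring. apply qs_1.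
Qed.

Lemma comm_q : Defs.comm (qM AQ) (qM BQ) = qM (qmul hQ (qmul BQ (qmul (qc hQ) (qc BQ)))).
Proof.
assert (PB' : forall Y, qmul PQ (qmul BQ Y) = qmul BQ (qmul PQ Y)) by (intro; rewrite <- !qmul_assoc, PB_comm; auto).
pose proof qn_hQ as Hh. pose proof qn_PQ as HP.
unfold Defs.comm. rewrite !qM_inv by (apply qn_AQ || apply qn_BQ). rewrite !qM_mul. f_equal.
unfold AQ. rewrite !qc_mul, !qmul_assoc, PB', (qcr' PQ) by auto. reflexivity.
Qed.

Lemma mu_eq : 1 - mu (L_s e p t) = 2 * sn^2 * kk^2 * st^2.
Proof.
unfold mu. rewrite Ls_q. unfold qT; cbn [tA tB]. rewrite comm_q, Mtr_q. unfold CR; cbn [Re]. assert (D2: forall x, 2 * x / 2 = x) by (intro; field). rewrite D2.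
pose proof kk2 as K. rewrite DD_eq in K. pose proof tri_n. pose proof tri_t.
unfold hQ, BQ, qmul, qc; cbn [q0 q1 q2 q3]. nsat.
Qed.

Lemma in_P4_L (Hst : st <> 0) : in_P4 (L_s e p t).
Proof.
rewrite Ls_q. split.
- unfold in_RT2, qT; cbn [tA tB ta tb].
  split; [apply qM_SU2, qn_AQ|]. split; [apply qM_SU2, qn_BQ|]. split; [apply qM_SU2, qn_aQ|].
  split; [apply qM_SU2, qn_bQ|].
  split; [rewrite Mtr_q; unfold aQ; cbn [q0]; f_equal; ring|].
  split; [rewrite Mtr_q; unfold bQ, hQ, aQ, qconj, qmul, qc, qs; cbn [q0 q1 q2 q3]; f_equal; ring|].
  unfold Defs.comm. rewrite !qM_inv by (apply qn_AQ || apply qn_BQ). rewrite !qM_mul, rel_q, Mid_q. reflexivity.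
- rewrite <- Ls_q. pose proof mu_eq. pose proof sn_pos. pose proof kk_pos.
  assert (0 < st^2) by (destruct (Rdichotomy _ _ Hst); nra).
  unfold mu in *. split.
  + pose proof kk2 as K. rewrite DD_eq in K. pose proof cn_pos.
    assert (kk^2 * (sn^2*st^2) <= 1) by (rewrite <- K; apply Rmult_le_compat_l; nra). nra.
  + assert (0 < sn^2) by nra. assert (0 < kk^2) by nra. assert (0 < 2 * sn ^ 2 * kk ^ 2 * st ^ 2) by (apply Rmult_lt_0_compat; [apply Rmult_lt_0_compat; [apply Rmult_lt_0_compat|]|]; lra). lra.
Qed.

Definition A0 sg := mkQ (-(kk*cn*sp*ct)) (kk*(sg*st)) 0 (kk*cp*cn*ct).
Definition B0 := mkQ cn 0 0 sn.
Definition a0 sg := mkQ 0 (-(sg*sin(p+nu))) (-(sg*cos(p+nu))) 0.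
Definition b0 sg := mkQ 0 (sg * (kk^2 * (cn^2*ct^2*sin(p+nu) + st^2*sin(p-nu))))
  (sg*(kk^2*(cn^2*ct^2*cos(p+nu) + st^2*cos(p-nu)))) (kk^2 * (-(1/2) * sin(2*nu) * sin(2*t))).

Lemma norm_G (sg : R) (Hsg : sg^2 = 1) (Hs : 0 < sg * st) :
  exists G, qn G = 1 /\ qconj G AQ = A0 sg /\ qconj G BQ = B0 /\ qconj G aQ = a0 sg /\ qconj G bQ = b0 sg.
Proof.
destruct (half ct st tri_t) as [c1 [s1 [N1 [C1 S1]]]].
assert (N3' : (sg * sin (p+nu))^2 + (-(sg*cos(p+nu)))^2 = 1).
{ pose proof (sin2_cos2 (p+nu)) as T. unfold Rsqr in *. clear - T Hsg. nsat. }
destruct (half _ _ N3') as [c3 [s3 [N3 [C3 S3]]]].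
set (r := / sqrt 2).
assert (R2 : 2 * r^2 = 1).
{ unfold r. pose proof (sqrt_sqrt 2 ltac:(lra)). pose proof (sqrt_lt_R0 2 ltac:(lra)). 
  set (s := sqrt 2) in *. replace (2 * (/s)^2) with (2 / (s*s)) by (field; lra). rewrite H. field. }
exists (qmul (mkQ c3 0 0 s3) (qmul (mkQ r 0 r 0) (mkQ c1 0 0 s1))).
assert (QC : forall X, qconj (qmul (mkQ c3 0 0 s3) (qmul (mkQ r 0 r 0) (mkQ c1 0 0 s1))) X =
   qconj (mkQ c3 0 0 s3) (qconj (mkQ r 0 r 0) (qconj (mkQ c1 0 0 s1) X))) by (intro; rewrite !qconj_comp, qmul_assoc; reflexivity).
split.
{ rewrite !qn_mul. unfold qn; cbn [q0 q1 q2 q3]. nsat. }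
rewrite !QC. 
pose proof tri_n as Tn. pose proof tri_p as Tp. pose proof tri_t as Tt. pose proof kk2 as K. rewrite DD_eq in K.
rewrite !(rotz c1 s1 _ N1), !(roty r _ R2), !(rotz c3 s3 _ N3).
unfold AQ, BQ, bQ, aQ, hQ, PQ, qconj, qs, qmul, qc; cbn [q0 q1 q2 q3].
rewrite C1, S1, C3, S3.
unfold A0, B0, a0, b0.
rewrite sin_plus, cos_plus, sin_minus, cos_minus, !sin_2a.
unfold cn, sn, cp, sp, ct, st in *.
replace (-(1/2) * (2 * sin nu * cos nu) * (2 * sin t * cos t)) with (-(2 * sin nu * cos nu * sin t * cos t)) by field.
clear QC Hs N3' C1 S1 C3 S3.
split; [|split; [|split]]; mcomp. all: clear - Hsg Tn Tp Tt K N1 N3 R2; nsat.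
Qed.

Lemma nrep (sg : R) (Hsg : sg^2 = 1) (Hs : 0 < sg * st) :
  (exists t', normalized_rep (L_s e p t) t') /\
  (forall t', normalized_rep (L_s e p t) t' -> ta t' = qM (a0 sg) /\ tb t' = qM (b0 sg)).
Proof.
destruct (norm_G sg Hsg Hs) as [G [NG [GA [GB [Ga Gb]]]]].
assert (Hk : 0 < kk * (sg * st)) by (apply Rmult_lt_0_compat; [apply kk_pos|auto]).
split.
- exists (qT (A0 sg) B0 (a0 sg) (b0 sg)). split.
  + exists (qM G). split; [apply qM_SU2; auto|]. rewrite Ls_q, conjT_q by auto. rewrite GA, GB, Ga, Gb. reflexivity.
  + destruct (Anorm_exists (A0 sg)) as [r [al [Hal [Hr EA]]]].
    * rewrite <- GA, qn_conj; auto; apply qn_AQ.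
    * reflexivity.
    * exact Hk.
    * exists al, nu, r. pose proof nu_bd. pose proof PI2_1. split; auto. split; [lra|]. split; auto.
      split; auto. unfold qT; cbn [tB]. rewrite B_norm_q. reflexivity.
- intros t' [[g [Hg Eg]] [al [be [r [Hal [Hbe [Hr [EA EB]]]]]]]].
  destruct (SU2_qM g Hg) as [G' [Eg' NG']]. subst g.
  rewrite Ls_q, conjT_q in Eg by auto. subst t'. unfold qT in *; cbn [tA tB ta tb] in *.
  rewrite A_norm_q in EA. rewrite B_norm_q in EB. apply qM_inj in EA. apply qM_inj in EB.
  set (H := qmul G' (qc G)).
  assert (NH : qn H = 1) by (unfold H; rewrite qn_mul, qn_c, NG, NG'; ring).
  assert (HC : forall X, qconj G' X = qconj H (qconj G X)).
  { intro X. unfold H. rewrite qconj_comp, qmul_assoc, qmul_c_l, qmul_1_r; auto. }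
  assert (ST : forall X, qconj H X = X).
  { apply (stab H (A0 sg) cn sn (cos be) (sin be) NH sn_pos).
    - apply sin_gt_0; lra.
    - rewrite <- EB, HC, GB. reflexivity.
    - reflexivity.
    - exact Hk.
    - rewrite <- GA, <- HC, EA. reflexivity.
    - rewrite <- GA, <- HC, EA. cbn [q1]. apply sqrt_lt_R0. nra. }
  rewrite !HC, !ST, Ga, Gb. split; reflexivity.
Qed.
End S.


Lemma sin_pos_lt t : 0 < t < 2*PI -> 0 < sin t -> t < PI.
Proof. intros H S. destruct (Rlt_or_le t PI); auto. destruct (Req_dec t PI).
- subst. rewrite sin_PI in S. lra.
- pose proof (sin_lt_0 t ltac:(lra) ltac:(lra)). lra. Qed.
Lemma sin_neg_gt t : 0 < t < 2*PI -> sin t < 0 -> PI < t.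
Proof. intros H S. destruct (Rlt_or_le PI t); auto. destruct (Req_dec t PI).
- subst. rewrite sin_PI in S. lra.
- pose proof (sin_gt_0 t ltac:(lra) ltac:(lra)). lra. Qed.

Lemma ang_eq t1 t2 : 0 < t1 < 2*PI -> 0 < t2 < 2*PI -> sin t1 <> 0 ->
  cos t1 = cos t2 -> sin t1 = sin t2 -> t1 = t2.
Proof.
intros H1 H2 N C S. destruct (Rdichotomy _ _ N) as [L|L].
- pose proof (sin_neg_gt t1 H1 L). rewrite S in L. pose proof (sin_neg_gt t2 H2 L).
  assert (t1 - PI = t2 - PI); [|lra].
  apply cos_inj; try lra. rewrite !cos_minus, cos_PI, sin_PI, C. ring.
- pose proof (sin_pos_lt t1 H1 L). rewrite S in L. pose proof (sin_pos_lt t2 H2 L).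
  apply cos_inj; try lra.
Qed.

Lemma st_ne0 t : 0 < t < 2*PI -> t <> PI -> sin t <> 0.
Proof. intros H N. destruct (Rlt_or_le t PI).
- pose proof (sin_gt_0 t ltac:(lra) H0). lra.
- pose proof (sin_lt_0 t ltac:(lra) ltac:(lra)). lra. Qed.

Lemma qT_inj A B a b A' B' a' b' : qT A B a b = qT A' B' a' b' -> A = A' /\ B = B' /\ a = a' /\ b = b'.
Proof. intro E. pose proof (f_equal tA E). pose proof (f_equal tB E). pose proof (f_equal ta E). pose proof (f_equal tb E).
unfold qT in *; cbn [tA tB ta tb] in *. repeat split; apply qM_inj; auto. Qed.

Lemma bQ_eq e p t : 0 < e < 1 -> 0 < p < PI -> bQ e p t = mkQ 0 (-(2 * kk e p t ^2 * sn e p * cn e p * st t)) 0 (-1 + 2 * kk e p t ^2 * sn e p ^2 * st t ^2).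
Proof. intros He Hp. pose proof (kk2 e p t He Hp) as K. rewrite DD_eq in K.
unfold bQ, hQ, aQ, qconj, qmul, qc, qs; cbn [q0 q1 q2 q3]; mcomp; try ring. clear - K. nsat. Qed.

Lemma hQ_nu e p1 p2 t : nu e p1 = nu e p2 -> hQ e p1 t = hQ e p2 t.
Proof. intro E. unfold hQ, kk, DD, L_D, cn, sn. fold (nu e p1) (nu e p2). rewrite E. reflexivity. Qed.

Lemma inj e p1 t1 p2 t2 : 0 < e < 1 -> dom_y_ne0 p1 t1 -> dom_y_ne0 p2 t2 ->
  tequiv (L_s e p1 t1) (L_s e p2 t2) -> p1 = p2 /\ t1 = t2.
Proof.
intros He [Hp1 [Ht1 Hn1]] [Hp2 [Ht2 Hn2]] [g [Hg Eg]].
destruct (SU2_qM g Hg) as [G [EG NG]]. subst g.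
rewrite (Ls_q e p1 t1 He Hp1), (Ls_q e p2 t2 He Hp2), conjT_q in Eg by auto.
apply qT_inj in Eg. destruct Eg as [EA [EB [Ea Eb]]].
destruct (fix_ez G NG Ea) as [G1 G2].
destruct G as [c x y z]. cbn [q1 q2] in G1, G2. subst x y.
assert (Nc : c^2 + z^2 = 1) by (unfold qn in NG; cbn [q0 q1 q2 q3] in NG; nra).
rewrite (rotz c z (BQ e p1 t1) Nc) in EB. rewrite (rotz c z (bQ e p1 t1) Nc) in Eb.
rewrite (bQ_eq e p1 t1 He Hp1), (bQ_eq e p2 t2 He Hp2) in Eb.
pose proof (st_ne0 t1 Ht1 Hn1) as S1. pose proof (st_ne0 t2 Ht2 Hn2) as S2.
fold (st t1) (st t2) in S1, S2.
assert (B0 := f_equal q0 EB). unfold BQ in B0; cbn [q0] in B0.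
assert (Enu : nu e p1 = nu e p2).
{ pose proof (nu_bd e p1 He Hp1). pose proof (nu_bd e p2 He Hp2). pose proof PI2_1.
  apply cos_inj; try lra. exact B0. }
assert (Esp : sp p1 = sp p2).
{ unfold nu, L_nu in Enu. unfold sp. apply (Rmult_eq_reg_l e); lra. }
assert (Ecn : cn e p2 = cn e p1) by (unfold cn; rewrite Enu; auto).
assert (Esn : sn e p2 = sn e p1) by (unfold sn; rewrite Enu; auto).
pose proof (sn_pos e p1 He Hp1) as Psn. pose proof (cn_pos e p1 He Hp1) as Pcn.
pose proof (kk_pos e p1 t1 He Hp1) as Pk.
assert (B1 := f_equal q1 EB). assert (B2 := f_equal q2 EB). unfold BQ in B1, B2; cbn [q1 q2] in B1, B2.
rewrite Esn in B1, B2.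
assert (b1 := f_equal q1 Eb). assert (b2 := f_equal q2 Eb). cbn [q1 q2] in b1, b2.
assert (Sz : 2 * c * z = 0).
{ assert (0 < kk e p1 t1 ^2 * sn e p1 * cn e p1) by (apply Rmult_lt_0_compat; [apply Rmult_lt_0_compat|]; nra).
  assert (Hst: st t1 * st t1 > 0) by (destruct (Rdichotomy _ _ S1); nra).
  assert (X : (2*c*z) * (kk e p1 t1 ^2 * sn e p1 * cn e p1 * st t1) = 0) by nra.
  apply Rmult_integral in X. destruct X as [X|X]; auto.
  exfalso. apply Rmult_integral in X. destruct X; [lra|auto]. }
assert (Ct : forall C S, C = c^2 - z^2 -> S = 2*c*z -> ct t2 = C * ct t1 + S * st t1 /\ st t2 = - S * ct t1 + C * st t1).
{ intros C S -> ->. split; apply (Rmult_eq_reg_l (sn e p1)); try lra. }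
destruct (Rmult_integral _ _ Sz) as [Sc|Sz'].
-
  assert (c = 0) by lra. subst c. assert (Z2 : z^2 = 1) by nra.
  destruct (Ct (0^2 - z^2) 0 eq_refl) as [Ec Es]; [ring|].
  replace (0^2 - z^2) with (-1) in Ec, Es by nra.
  exfalso.
  assert (Ekk : kk e p2 t2 = kk e p1 t1).
  { unfold kk. f_equal. f_equal. rewrite !DD_eq, Ecn, Esn, Es. ring. }
  unfold AQ in EA.
  assert (Eh : qconj (mkQ 0 0 0 z) (hQ e p1 t1) = qs (-1) (hQ e p2 t2)).
  { rewrite (rotz 0 z _ Nc). unfold hQ, qs; cbn [q0 q1 q2 q3]. rewrite Ekk, Ecn, Esn, Es. mcomp; rewrite ?Z2; ring. }
  assert (EP : qconj (mkQ 0 0 0 z) (PQ p1 t1) = mkQ (cp p1) (sp p1 * ct t2) (sp p1 * st t2) 0).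
  { rewrite (rotz 0 z _ Nc). unfold PQ; cbn [q0 q1 q2 q3]. rewrite Ec, Es. mcomp; rewrite ?Z2; ring. }
  rewrite qconj_mul, Eh, EP, qmul_s_l in EA by auto.
  apply (f_equal (qmul (qc (hQ e p2 t2)))) in EA.
  rewrite qmul_s_r, !qcl' in EA by (apply qn_hQ; auto).
  apply (f_equal q2) in EA. unfold qs, PQ in EA; cbn [q2] in EA. rewrite Esp in EA.
  pose proof (sp_pos p2 Hp2). destruct (Rdichotomy _ _ S2); nra.
-
  assert (z = 0) by lra. subst z. assert (C2 : c^2 = 1) by nra.
  destruct (Ct (c^2 - 0^2) (2*c*0) eq_refl eq_refl) as [Ec Es].
  replace (c^2 - 0^2) with 1 in Ec, Es by nra. replace (2*c*0) with 0 in Ec, Es by ring.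
  assert (Et : t1 = t2) by (apply ang_eq; auto; unfold ct, st in *; lra).
  subst t2. split; auto.
  assert (Id : forall X, qconj (mkQ c 0 0 0) X = X).
  { intro X. rewrite (rotz c 0 X Nc). destruct X as [x0 x1 x2 x3]; cbn [q0 q1 q2 q3]. mcomp; rewrite ?C2; ring. }
  rewrite Id in EA. unfold AQ in EA. rewrite (hQ_nu e p2 p1 t1 (eq_sym Enu)) in EA.
  assert (EP : PQ p1 t1 = PQ p2 t1).
  { apply (f_equal (qmul (qc (hQ e p1 t1)))) in EA. rewrite !qcl' in EA by (apply qn_hQ; auto).
    exact EA. }
  apply (f_equal q0) in EP. unfold PQ, cp in EP; cbn [q0] in EP. apply cos_inj; lra.
Qed.


Lemma kk2' e p t : 0 < e < 1 -> 0 < p < PI -> kk e p t ^ 2 = / L_D e p t.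
Proof. intros He Hp. pose proof (kk2 e p t He Hp). pose proof (DD_pos e p t He Hp). unfold DD in *.
apply (Rmult_eq_reg_r (L_D e p t)); [|lra]. rewrite H. field. lra. Qed.

Theorem theorem2p15 :
  exists eps0 : R, 0 < eps0 /\
  forall eps : R, 0 < eps < eps0 ->
  (* values in P_4 *)
  (forall phi theta, dom_y_ne0 phi theta -> in_P4 (L_s eps phi theta)) /\
  (* injectivity into R(T^2,2) *)
  (forall phi1 theta1 phi2 theta2,
      dom_y_ne0 phi1 theta1 -> dom_y_ne0 phi2 theta2 ->
      tequiv (L_s eps phi1 theta1) (L_s eps phi2 theta2) ->
      phi1 = phi2 /\ theta1 = theta2) /\
  (* normalized representative, theta in (0,pi) *)
  (forall phi theta, 0 < phi < PI -> 0 < theta < PI ->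
      let nu := L_nu eps phi in
      let D := L_D eps phi theta in
      (exists t', normalized_rep (L_s eps phi theta) t') /\
      (forall t', normalized_rep (L_s eps phi theta) t' ->
         ta t' = isig (- sin (phi + nu)) (- cos (phi + nu)) 0 /\
         tb t' = isig
           (/ D * (cos nu ^ 2 * cos theta ^ 2 * sin (phi + nu)
                   + sin theta ^ 2 * sin (phi - nu)))
           (/ D * (cos nu ^ 2 * cos theta ^ 2 * cos (phi + nu)
                   + sin theta ^ 2 * cos (phi - nu)))
           (/ D * (- (1 / 2) * sin (2 * nu) * sin (2 * theta))))) /\
  (* normalized representative, theta in (pi,2pi) *)
  (forall phi theta, 0 < phi < PI -> PI < theta < 2 * PI ->
      let nu := L_nu eps phi in
      let D := L_D eps phi theta in
      (exists t', normalized_rep (L_s eps phi theta) t') /\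
      (forall t', normalized_rep (L_s eps phi theta) t' ->
         ta t' = isig (sin (phi + nu)) (cos (phi + nu)) 0 /\
         tb t' = isig
           (/ D * (- (cos nu ^ 2 * cos theta ^ 2 * sin (phi + nu))
                   - sin theta ^ 2 * sin (phi - nu)))
           (/ D * (- (cos nu ^ 2 * cos theta ^ 2 * cos (phi + nu))
                   - sin theta ^ 2 * cos (phi - nu)))
           (/ D * (- (1 / 2) * sin (2 * nu) * sin (2 * theta))))).
Proof.
exists 1. split; [lra|]. intros eps He.
split; [|split; [|split]].
- intros phi theta [Hp [Ht Hn]]. apply in_P4_L; auto. apply st_ne0; auto.
- intros. eapply inj; eauto.
- intros phi theta Hp Ht. cbv zeta.
  assert (Hs : 0 < 1 * st theta) by (unfold st; rewrite Rmult_1_l; apply sin_gt_0; lra).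
  destruct (nrep eps phi theta He Hp 1 ltac:(ring) Hs) as [Ex Un]. split; auto.
  intros t' N. destruct (Un t' N) as [Ea Eb]. rewrite Ea, Eb, !isig_q.
  rewrite <- (kk2' eps phi theta He Hp). unfold a0, b0, cn, sn, ct, st, nu.
  split; f_equal; mcomp; ring.
- intros phi theta Hp Ht. cbv zeta.
  assert (Hs : 0 < -1 * st theta) by (unfold st; pose proof (sin_lt_0 theta ltac:(lra) ltac:(lra)); lra).
  destruct (nrep eps phi theta He Hp (-1) ltac:(ring) Hs) as [Ex Un]. split; auto.
  intros t' N. destruct (Un t' N) as [Ea Eb]. rewrite Ea, Eb, !isig_q.
  rewrite <- (kk2' eps phi theta He Hp). unfold a0, b0, cn, sn, ct, st, nu.
  split; f_equal; mcomp; ring.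
Qed.
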